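(* Let $P$ be a finite poset. Then $N_{diag}(S_N(P))=A(P)$.
   Context: For a poset $P$, $x\prec y$ means $x<y$ with no $z$ satisfying $x<z<y$; $\mathrm{Diag}(P)$ is the set of covering pairs $(x,y)$, and $\mathrm{Inc}(P)$ the set of pairs of incomparable elements. Four elements $a,b,c,d$ form an $N$ in $P$ if $b\prec c$, $a\prec c$, $b\prec d$ and $(a,d)\in\mathrm{Inc}(P)$; $(b,c)$ is the diagonal edge of this $N$. $N_{diag}(P)$ is the set of diagonal edges of all $N$'s in $P$. $S_N(P)$ is the poset obtained from $P$ by adding one new (dummy) vertex $u$ on each edge $(b,c)\in N_{diag}(P)$ (so that $b\prec u\prec c$), with the induced order. $A(P)$ is the set of pairs $(b,c)\in\mathrm{Diag}(P)\setminus N_{diag}(P)$ for which there exist $a,d\in P$ with $a<c$, $b<d$, $(a,b),(c,d)\in\mathrm{Inc}(P)$, and either $(a,c)\in N_{diag}(P)$ or $(b,d)\in N_{diag}(P)$. *)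

(* Defs.v *)
From mathcomp Require Import all_boot.
Set Implicit Arguments. Unset Strict Implicit. Unset Printing Implicit Defensive.

Section PosetNotions.
Variables (X : Type) (le : X -> X -> Prop).

Definition is_poset : Prop :=
  (forall x, le x x) /\
  (forall x y, le x y -> le y x -> x = y) /\
  (forall x y z, le x y -> le y z -> le x z).

Definition plt (x y : X) : Prop := le x y /\ x <> y.

Definition covers (x y : X) : Prop :=
  plt x y /\ ~ (exists z, plt x z /\ plt z y).

Definition incomp (x y : X) : Prop := ~ le x y /\ ~ le y x.

Definition isN (a b c d : X) : Prop :=
  covers b c /\ covers a c /\ covers b d /\ incomp a d.

Definition Ndiag (b c : X) : Prop := exists a d, isN a b c d.

Definition Aset (b c : X) : Prop :=
  covers b c /\ ~ Ndiag b c /\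
  exists a d, plt a c /\ plt b d /\ incomp a b /\ incomp c d /\
              (Ndiag a c \/ Ndiag b d).

End PosetNotions.

(* S_N(P): the elements of P (inl) plus one dummy vertex (inr) for each
   edge (b,c) ∈ N_diag(P). *)
Definition SN_carrier (T : Type) (le : T -> T -> Prop) : Type :=
  (T + {p : T * T | Ndiag le p.1 p.2})%type.

(* The induced order: the order generated by le together with b < u < c
   for the dummy u on (b,c). *)
Definition SN_le (T : Type) (le : T -> T -> Prop) (x y : SN_carrier le) : Prop :=
  match x, y with
  | inl x', inl y' => le x' y'
  | inl x', inr u => le x' (sval u).1
  | inr u, inl y' => le (sval u).2 y'
  | inr u, inr v => u = v \/ le (sval u).2 (sval v).1
  end.

(* Main.v *)
Require Import Defs.
From mathcomp Require Import all_boot.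
From Stdlib Require Import Classical ClassicalEpsilon.

Section S.
Variables (T : finType) (le : T -> T -> Prop) (hP : is_poset le).

Lemma refl x : le x x. Proof. by case: hP. Qed.
Lemma anti x y : le x y -> le y x -> x = y. Proof. move=> h1 h2; case: hP => _ [H _]; exact: H h1 h2. Qed.
Lemma trans x y z : le x y -> le y z -> le x z. Proof. move=> h1 h2; case: hP => _ [_ H]; exact: H h1 h2. Qed.

Notation Q := (SN_carrier le).
Notation leQ := (@SN_le T le).

Lemma ndiag_cov {u v} : Ndiag le u v -> covers le u v.
Proof. by case=> a [d [? _]]. Qed.

Lemma covQ_ll {b c} : covers leQ (inl b) (inl c) -> covers le b c /\ ~ Ndiag le b c.
Proof.
case=> [[hle hne] hno]; split; [split; first split|].
- exact hle.
- by move=> e; apply hne; rewrite e.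
- case=> z [[h1 n1] [h2 n2]]; apply hno; exists (inl z); split; split => //.
  + by move=> [e]; apply n1.
  + by move=> [e]; apply n2.
- move=> H; apply hno; exists (inr (exist _ (b,c) H)); split; split => //=; exact: refl.
Qed.

Lemma covQ_ll' {b c} : covers le b c -> ~ Ndiag le b c -> covers leQ (inl b) (inl c).
Proof.
case=> [[hle hne] hno] hN; split; first split => //.
- by move=> [e]; apply hne.
case=> [[z|u]] [[h1 n1] [h2 n2]].
- apply hno; exists z; split; split => //.
  + by move=> e; apply n1; rewrite e.
  + by move=> e; apply n2; rewrite e.
- move: h1 h2 => /= h1 h2.
  case: u n1 n2 h1 h2 => [[u1 u2] Hu] n1 n2 /= h1 h2.
  have [[l12 n12] _] := ndiag_cov Hu.
  have e1 : b = u1.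
    apply: NNPP => ne; apply hno; exists u1; split; split => //.
    + by apply: trans l12 h2.
    + by move=> e; apply n12; apply: anti => //; rewrite e.
  have e2 : u2 = c.
    apply: NNPP => ne; apply hno; exists u2; split; split => //.
    + by apply: trans h1 l12.
    + by move=> e; apply n12; apply: anti => //; rewrite -e.
  by apply hN; subst.
Qed.

Lemma covQ_lr {b u} : covers leQ (inl b) (inr u) -> b = (sval u).1.
Proof.
case=> [[hle hne] hno]; apply: NNPP => ne; apply hno; exists (inl (sval u).1).
split; split => //=; first by move=> [e]; apply ne.
exact: refl.
Qed.

Lemma covQ_lr' {b u} : b = (sval u).1 -> covers leQ (inl b) (inr u).
Proof.
move=> e; split; first by split => //=; rewrite e; apply refl.
case=> [[z|v]] [[h1 n1] [h2 n2]]; move: h1 h2 => /= h1 h2.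
- by apply n1; congr inl; apply: anti => //; rewrite e.
- case: h2 => [ev|h2]; first by apply n2; rewrite ev.
  case: v n1 n2 h1 h2 => [[v1 v2] Hv] n1 n2 /= h1 h2.
  have [[l12 n12] _] := ndiag_cov Hv.
  apply n12; apply: anti => //; apply: trans h2 _; rewrite -e; exact h1.
Qed.

Lemma covQ_rl {u c} : covers leQ (inr u) (inl c) -> c = (sval u).2.
Proof.
case=> [[hle hne] hno]; apply: NNPP => ne; apply hno; exists (inl (sval u).2).
split; split => //=; last by move=> [e]; apply ne.
exact: refl.
Qed.

Lemma covQ_rl' {u c} : c = (sval u).2 -> covers leQ (inr u) (inl c).
Proof.
move=> e; split; first by split => //=; rewrite e; apply refl.
case=> [[z|v]] [[h1 n1] [h2 n2]]; move: h1 h2 => /= h1 h2.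
- by apply n2; congr inl; apply: anti => //; rewrite e.
- case: h1 => [ev|h1]; first by apply n1; rewrite ev.
  case: v n1 n2 h1 h2 => [[v1 v2] Hv] n1 n2 /= h1 h2.
  have [[l12 n12] _] := ndiag_cov Hv.
  apply n12; apply: anti => //; apply: trans h2 _; rewrite e; exact h1.
Qed.

Lemma covQ_rr {u v} : ~ covers leQ (inr u) (inr v).
Proof.
case=> [[hle hne] hno]; case: hle => [e|h]; first by apply hne; rewrite e.
apply hno; exists (inl (sval u).2); split; split => //=; exact: refl.
Qed.


Definition bP (P : Prop) : bool := if excluded_middle_informative P then true else false.
Lemma bPP (P : Prop) : reflect P (bP P).
Proof. rewrite /bP; case: excluded_middle_informative => h; by constructor. Qed.

Lemma plt_trans x y z : plt le x y -> plt le y z -> plt le x z.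
Proof.
move=> [h1 n1] [h2 n2]; split; first exact: trans h1 h2.
move=> e; subst z; apply n1; exact: anti.
Qed.

Lemma down_cover n : forall x y,
  #|[pred z | bP (plt le x z /\ plt le z y)]| < n -> plt le x y ->
  exists z, le x z /\ covers le z y.
Proof.
elim: n => [//|n IH] x y hc hxy.
case: (classic (exists w, plt le x w /\ plt le w y)) => [[w [hxw hwy]]|hno]; last first.
  by exists x; split; [apply refl | split].
suff hc' : #|[pred z | bP (plt le w z /\ plt le z y)]| < n.
  have [z [hwz hz]] := IH w y hc' hwy.
  by exists z; split => //; apply: trans hwz; case: hxw.
rewrite ltnS in hc; apply: leq_trans hc; apply: proper_card; apply/properP; split.
  apply/subsetP => z; rewrite !inE => /bPP [h1 h2]; apply/bPP; split => //.
  exact: plt_trans h1.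
exists w; rewrite !inE; first by apply/bPP.
by apply/bPP => -[[_ h] _]; apply h.
Qed.

Lemma up_cover n : forall x y,
  #|[pred z | bP (plt le x z /\ plt le z y)]| < n -> plt le x y ->
  exists z, covers le x z /\ le z y.
Proof.
elim: n => [//|n IH] x y hc hxy.
case: (classic (exists w, plt le x w /\ plt le w y)) => [[w [hxw hwy]]|hno]; last first.
  by exists y; split; [split | apply refl].
suff hc' : #|[pred z | bP (plt le x z /\ plt le z w)]| < n.
  have [z [hz hzw]] := IH x w hc' hxw.
  by exists z; split => //; apply: trans hzw _; case: hwy.
rewrite ltnS in hc; apply: leq_trans hc; apply: proper_card; apply/properP; split.
  apply/subsetP => z; rewrite !inE => /bPP [h1 h2]; apply/bPP; split => //.
  exact: plt_trans hwy.
exists w; rewrite !inE; first by apply/bPP.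
by apply/bPP => -[_ [_ h]]; apply h.
Qed.

Lemma down_cover' x y : plt le x y -> exists z, le x z /\ covers le z y.
Proof. by apply: down_cover; apply: ltnSn. Qed.
Lemma up_cover' x y : plt le x y -> exists z, covers le x z /\ le z y.
Proof. by apply: up_cover; apply: ltnSn. Qed.

Lemma cov_into_c a c : covers leQ a (inl c) -> exists a', covers le a' c /\
  ((a = inl a' /\ ~ Ndiag le a' c) \/ exists v, a = inr v /\ sval v = (a', c)).
Proof.
case: a => [a'|v] H.
  by have [h1 h2] := covQ_ll H; exists a'; split => //; left.
have e := covQ_rl H; exists (sval v).1; split.
  rewrite e; apply: ndiag_cov; exact: (proj2_sig v).
by right; exists v; split => //; rewrite e; case: (sval v).
Qed.

Lemma cov_from_b b d : covers leQ (inl b) d -> exists d', covers le b d' /\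
  ((d = inl d' /\ ~ Ndiag le b d') \/ exists w, d = inr w /\ sval w = (b, d')).
Proof.
case: d => [d'|w] H.
  by have [h1 h2] := covQ_ll H; exists d'; split => //; left.
have e := covQ_lr H; exists (sval w).2; split.
  rewrite e; apply: ndiag_cov; exact: (proj2_sig w).
by right; exists w; split => //; rewrite e; case: (sval w).
Qed.

Lemma mid_contra b c a'' d'' : covers le b c -> covers le a'' c ->
  covers le b d'' -> le d'' a'' -> False.
Proof.
move=> [_ hno] [[hac nac] _] [hbd _] hda; apply hno; exists d''; split => //.
split; first exact: trans hda hac.
move=> e; subst d''; apply nac; exact: anti.
Qed.

Lemma build b c a d a'' d'' (A D : Q) :
  covers le b c -> ~ Ndiag le b c -> incomp le a b -> incomp le c d ->
  le a a'' -> covers le a'' c -> covers le b d'' -> le d'' d ->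
  ((A = inl a'' /\ ~ Ndiag le a'' c) \/ exists u, A = inr u /\ sval u = (a'', c)) ->
  ((D = inl d'' /\ ~ Ndiag le b d'') \/ exists w, D = inr w /\ sval w = (b, d'')) ->
  ((exists u, A = inr u) \/ (exists w, D = inr w)) ->
  isN leQ A (inl b) (inl c) D.
Proof.
move=> Hbc nbc [iab _] [icd _] haa Hac Hbd hdd SA SD Hor.
split; first exact: covQ_ll'.
split.
  case: SA => [[-> h]|[u [-> e]]]; first exact: covQ_ll'.
  by apply: covQ_rl'; rewrite e.
split.
  case: SD => [[-> h]|[w [-> e]]]; first exact: covQ_ll'.
  by apply: covQ_lr'; rewrite e.
move: Hor; case: SA => [[-> hA]|[u [-> eu]]]; case: SD => [[-> hD]|[w [-> ew]]]; move=> Hor.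
- by case: Hor => -[? ?].
- rewrite /incomp /= ew /=; split => h.
    by apply iab; apply: trans haa h.
  exact: mid_contra Hbc Hac Hbd h.
- rewrite /incomp /= eu /=; split => h.
    by apply icd; apply: trans h hdd.
  exact: mid_contra Hbc Hac Hbd h.
- rewrite /incomp /= eu ew /=; split => -[h|h].
  + by move: eu; rewrite h ew => -[e _]; apply iab; rewrite e.
  + by case: Hbc => -[hb nb] _; apply nb; apply: anti.
  + by move: eu; rewrite -h ew => -[e _]; apply iab; rewrite e.
  + exact: mid_contra Hbc Hac Hbd h.
Qed.

Lemma main :
  forall x y : Q,
    Ndiag leQ x y <->
    exists b c : T, x = inl b /\ y = inl c /\ Aset le b c.
Proof.
move=> x y; split.
- move=> [a [d [Hxy [Hay [Hxd Hinc]]]]].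
  case: x Hxy Hxd => [b|u] Hxy Hxd; last first.
    case: y Hxy Hay => [c|v] Hxy Hay; last by case: (covQ_rr Hxy).
    have ec := covQ_rl Hxy.
    case: d Hxd Hinc => [d'|w] Hxd Hinc; last by case: (covQ_rr Hxd).
    have ed := covQ_rl Hxd.
    move: Hinc; rewrite ed -ec => -[H _]; case: (H (proj1 (proj1 Hay))).
  case: y Hxy Hay => [c|v] Hxy Hay; last first.
    have eb := covQ_lr Hxy.
    case: a Hay Hinc => [a'|w] Hay Hinc; last by case: (covQ_rr Hay).
    have ea := covQ_lr Hay.
    move: Hinc; rewrite ea -eb => -[H _]; case: (H (proj1 (proj1 Hxd))).
  have [Hbc nbc] := covQ_ll Hxy.
  have [a' [Ha'c Ha]] := cov_into_c _ _ Hay.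
  have [d' [Hbd' Hd]] := cov_from_b _ _ Hxd.
  have ab : a' = b -> False.
    move=> e; subst a'; case: Ha => [[ea _]|[v [ea ev]]].
      by subst a; case: Hinc => H _; apply: H; case: Hxd => -[].
    by apply: nbc; have := proj2_sig v; rewrite ev.
  have cd : c = d' -> False.
    move=> e; subst d'; case: Hd => [[ed _]|[w [ed ew]]].
      by subst d; case: Hinc => H _; apply: H; case: Hay => -[].
    by apply: nbc; have := proj2_sig w; rewrite ew.
  exists b, c; split => //; split => //; split => //; split => //.
  exists a', d'; split; first by case: Ha'c.
  split; first by case: Hbd'.
  split.
    split => h.
      apply: ab; apply: NNPP => ne; case: Ha'c => _ H; apply: H; exists b.
      by split; split => //; case: Hbc => -[].
    apply: ab; apply: NNPP => ne; case: Hbc => _ H; apply: H; exists a'.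
    by split; [split => // e; apply ne | case: Ha'c].
  split.
    split => h.
      apply: cd; apply: NNPP => ne; case: Hbd' => _ H; apply: H; exists c.
      by split; split => //; case: Hbc => -[].
    apply: cd; apply: NNPP => ne; case: Hbc => _ H; apply: H; exists d'.
    by split; [case: Hbd' | split => // e; apply ne].
  apply: NNPP => hn; apply: nbc.
  case: Ha => [[ea _]|[v [ea ev]]]; last first.
    by case: hn; left; have := proj2_sig v; rewrite ev.
  case: Hd => [[ed _]|[w [ed ew]]]; last first.
    by case: hn; right; have := proj2_sig w; rewrite ew.
  subst a d; exists a', d'; split => //.
- move=> [b [c [-> [-> [Hbc [nbc [a [d [pac [pbd [iab [icd Hor]]]]]]]]]]]].
  case: Hor => [Hac|Hbd].
    have [d'' [Hbd'' ld]] := up_cover' _ _ pbd.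
    have Hac' : covers le a c := ndiag_cov Hac.
    case: (classic (Ndiag le b d'')) => Hn.
      exists (inr (exist _ (a, c) Hac)), (inr (exist _ (b, d'') Hn)).
      apply: (@build _ _ _ _ _ _ _ _ Hbc nbc iab icd (refl a) Hac' Hbd'' ld); by eauto.
    exists (inr (exist _ (a, c) Hac)), (inl d'').
    apply: (@build _ _ _ _ _ _ _ _ Hbc nbc iab icd (refl a) Hac' Hbd'' ld); by eauto.
  have [a'' [la Ha'']] := down_cover' _ _ pac.
  have Hbd' : covers le b d := ndiag_cov Hbd.
  case: (classic (Ndiag le a'' c)) => Hn.
    exists (inr (exist _ (a'', c) Hn)), (inr (exist _ (b, d) Hbd)).
    apply: (@build _ _ _ _ _ _ _ _ Hbc nbc iab icd la Ha'' Hbd' (refl d)); by eauto.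
  exists (inl a''), (inr (exist _ (b, d) Hbd)).
  apply: (@build _ _ _ _ _ _ _ _ Hbc nbc iab icd la Ha'' Hbd' (refl d)); by eauto.
Qed.

End S.

Theorem lemma3 (T : finType) (le : T -> T -> Prop) (hP : is_poset le) :
  forall x y : SN_carrier le,
    Ndiag (@SN_le T le) x y <->
    exists b c : T, x = inl b /\ y = inl c /\ Aset le b c.
Proof. exact: main. Qed.
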